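(* For every $A\in\mathcal{B}$ we have $\det(A)=(-t)^k$ for some integer $k$. In particular, $\overline{\rho}(\mathcal{B})=\mathrm{PSL}(2,\mathbb{Z})$.
   Context: For a matrix $A$ with Laurent polynomial entries, $\overline{A}$ denotes the matrix obtained by substituting $t\mapsto t^{-1}$ in every entry. Let $J_3=\begin{pmatrix}1&-t^{-1}&-t^{-1}\\-t&1&-t^{-1}\\-t&-t&1\end{pmatrix}$, $v=(t,t^2,t^3)$ (a row vector) and $\vec{1}=(1,1,1)^T$. The formal Burau group is $\mathcal{B}=\{A\in\mathrm{GL}(3,\mathbb{Z}[t,t^{-1}]) : vA=v,\ A\vec 1=\vec 1,\ \overline{A}J_3A^T=J_3\}$. For $A\in\mathcal{B}$, let $B=A|_{t=-1}\in\mathrm{GL}(3,\mathbb{Z})$ and $\rho(B)=\begin{pmatrix}1-B_{13}&1-B_{11}\\1-B_{33}&1-B_{31}\end{pmatrix}\in\mathrm{GL}(2,\mathbb{Z})$; $\overline{\rho}(A)$ is the image of $\rho(B)$ in $\mathrm{PGL}(2,\mathbb{Q}(t))$ (quotient by nonzero scalars), and $\mathrm{PSL}(2,\mathbb{Z})$ is identified with the image of $\mathrm{SL}(2,\mathbb{Z})$ there. *)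

(* Defs.v *)
From HB Require Import structures.
From mathcomp Require Import all_boot all_order all_algebra.
From mathcomp Require Import fraction generic_quotient.
Set Implicit Arguments. Unset Strict Implicit. Unset Printing Implicit Defensive.
Import Order.TTheory GRing.Theory Num.Theory.
Local Open Scope ring_scope.

Notation K := {fraction {poly rat}}.
Definition tK : K := tofrac 'X.

Definition polyK (p : {poly int}) : K := tofrac (map_poly (fun z : int => z%:~R) p).

Definition laurent (x : K) : Prop :=
  exists (n : nat) (p : {poly int}), x = polyK p / tK ^+ n.

(* The substitution t |-> t^-1 on Q(t) (a field automorphism):
   p/q |-> p(t^-1)/q(t^-1), computed on a representative of the fraction. *)
Definition subst_inv (p : {poly rat}) : K := (map_poly (fun c : rat => tofrac (c%:P)) p).[tK^-1].
Definition barK (x : K) : K :=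
  subst_inv (\n_(repr x)) / subst_inv (\d_(repr x)).
Definition barmx m n (A : 'M[K]_(m, n)) : 'M[K]_(m, n) := map_mx barK A.

(* Evaluation of a Laurent polynomial at t = -1 (relational form):
   x = p(t)/t^n evaluates to p(-1)/(-1)^n = (-1)^n p(-1). *)
Definition eval_m1 (x : K) (z : int) : Prop :=
  exists (n : nat) (p : {poly int}),
    x = polyK p / tK ^+ n /\ z = (-1) ^+ n * p.[-1].
Definition eval_m1_mx m n (A : 'M[K]_(m, n)) (B : 'M[int]_(m, n)) : Prop :=
  forall i j, eval_m1 (A i j) (B i j).

Definition i1 : 'I_3 := @Ordinal 3 0 isT.
Definition i2 : 'I_3 := @Ordinal 3 1 isT.
Definition i3 : 'I_3 := @Ordinal 3 2 isT.

Definition J3 : 'M[K]_3 :=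
  \matrix_(i < 3, j < 3)
    (if i == j then 1 else if (i < j)%N then - tK^-1 else - tK).

Definition vK : 'rV[K]_3 := \row_(j < 3) tK ^+ j.+1.
Definition ones : 'cV[K]_3 := const_mx 1.

Definition GL3_laurent (A : 'M[K]_3) : Prop :=
  (forall i j, laurent (A i j)) /\
  exists A' : 'M[K]_3, (forall i j, laurent (A' i j)) /\
                       A *m A' = 1%:M /\ A' *m A = 1%:M.

Definition burau (A : 'M[K]_3) : Prop :=
  [/\ GL3_laurent A, vK *m A = vK, A *m ones = ones &
      barmx A *m J3 *m A^T = J3].

Definition rho (B : 'M[int]_3) : 'M[int]_2 :=
  \matrix_(i < 2, j < 2)
    (1 - B (if i == 0 :> nat then i1 else i3) (if j == 0 :> nat then i3 else i1)).

(* Equality in PGL(2, Q(t)) of the images of two integer matrices. *)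
Definition intmxK m n (M : 'M[int]_(m, n)) : 'M[K]_(m, n) :=
  map_mx (fun z : int => z%:~R) M.
Definition proj_eq (M N : 'M[int]_2) : Prop :=
  exists c : K, c != 0 /\ intmxK M = c *: intmxK N.

(* Main.v *)
Require Import Defs.
From HB Require Import structures.
From mathcomp Require Import all_boot all_order all_algebra.
From mathcomp Require Import fraction generic_quotient.
From mathcomp Require Import ring lra zify.
Import Order.TTheory GRing.Theory Num.Theory.
Local Open Scope ring_scope.
Notation "x %:F" := (@tofrac _ x) (format "x %:F") : ring_scope.
Set Implicit Arguments. Unset Strict Implicit. Unset Printing Implicit Defensive.

Definition fC : rat -> K := (@tofrac {poly rat}) \o polyC.
Definition phi (p : {poly rat}) : K := (map_poly fC p).[tK^-1].
Lemma phiE p : subst_inv p = phi p. Proof. by []. Qed.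
Lemma phiD : {morph phi : p q / p + q}.
Proof. by move=> p q; rewrite /phi rmorphD hornerD. Qed.
Lemma phiM : {morph phi : p q / p * q}.
Proof. by move=> p q; rewrite /phi rmorphM hornerM. Qed.
Lemma phiC c : phi c%:P = (c%:P)%:F.
Proof. by rewrite /phi map_polyC hornerC. Qed.
Lemma phi1 : phi 1 = 1.
Proof. by rewrite phiC tofrac1. Qed.
Lemma phiX : phi 'X = tK^-1.
Proof. by rewrite /phi map_polyX hornerX. Qed.
Lemma tK_neq0 : tK != 0.
Proof. by rewrite /tK tofrac_eq0 polyX_eq0. Qed.

Lemma phi_neq0 p : p != 0 -> phi p != 0.
Proof.
move=> p0; set n := size p.
have n0 : (0 < n)%N by rewrite size_poly_gt0.
pose q := \poly_(i < n) p`_(n.-1 - i).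
have q0 : q != 0.
  apply/eqP => /(congr1 (fun r : {poly rat} => r`_0)).
  rewrite coef_poly n0 subn0 coef0 => /eqP.
  by rewrite -lead_coefE lead_coef_eq0 (negbTE p0).
have E : phi p * tK ^+ n.-1 = q%:F.
  rewrite /phi horner_coef size_map_poly mulr_suml /q poly_def rmorph_sum /=.
  rewrite (reindex_inj rev_ord_inj) /=; apply: eq_bigr => i _.
  rewrite coef_map /= -mul_polyC rmorphM /= rmorphXn /= -/tK.
  have -> : (n - i.+1 = n.-1 - i)%N by lia.
  have lei : (i <= n.-1)%N by rewrite -ltnS prednK.
  rewrite /fC /= -mulrA; congr (_ * _).
  rewrite -{2}(subnK lei) exprD exprVn mulKf //; exact: expf_neq0 tK_neq0.
apply/eqP => ph0; move: E; rewrite ph0 mul0r => /esym/eqP.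
by rewrite tofrac_eq0 (negbTE q0).
Qed.
Local Open Scope quotient_scope.
Lemma pi_frac (r : {ratio {poly rat}}) : \pi_K r = (\n_r)%:F / (\d_r)%:F.
Proof.
have dn := denom_ratioP r.
apply: (@mulIf _ (\d_r)%:F); first by rewrite tofrac_eq0.
rewrite divfK ?tofrac_eq0 //.
unlock tofrac.
transitivity (\pi_K (FracField.mulf r (Ratio (\d_r) 1))).
  by rewrite FracField.pi_mul.
apply/eqmodP; rewrite /= FracField.equivfE /FracField.mulf.
rewrite !numden_Ratio ?oner_eq0 ?mulf_neq0 ?oner_eq0 //.
by rewrite !mulr1 mulrC.
Qed.

Lemma frac_repr (x : K) : x = (\n_(repr x))%:F / (\d_(repr x))%:F.
Proof. by rewrite -pi_frac reprK. Qed.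

Lemma phiB : {morph phi : p q / p - q}.
Proof. by move=> p q; rewrite /phi rmorphB hornerD hornerN. Qed.

Lemma barK_frac a b : b != 0 -> barK (a%:F / b%:F) = phi a / phi b.
Proof.
move=> b0; rewrite /barK !phiE.
set x := a%:F / b%:F.
have d0 := denom_ratioP (repr x).
have := frac_repr x; rewrite {1}/x => /eqP.
rewrite eqr_div ?tofrac_eq0 // -!tofracM tofrac_eq => /eqP E.
apply/eqP; rewrite eqr_div ?phi_neq0 // -!phiM.
by rewrite E.
Qed.

Lemma barK_poly a : barK a%:F = phi a.
Proof. by rewrite -[a%:F]divr1 -tofrac1 barK_frac ?oner_eq0 // phi1 divr1. Qed.

Lemma divB_gen (F : fieldType) (a b c d : F) : b != 0 -> d != 0 ->
  a / b - c / d = (a * d - c * b) / (b * d).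
Proof. by move=> b0 d0; field; rewrite b0 d0. Qed.

Lemma barKB : {morph barK : x y / x - y}.
Proof.
move=> x y.
rewrite [x]frac_repr [y]frac_repr.
set a := \n_(repr x); set b := \d_(repr x); set c := \n_(repr y); set d := \d_(repr y).
have b0 : b != 0 by apply: denom_ratioP.
have d0 : d != 0 by apply: denom_ratioP.
have -> : a%:F / b%:F - c%:F / d%:F = (a * d - c * b)%:F / (b * d)%:F.
  rewrite tofracB !tofracM; apply: divB_gen; by rewrite tofrac_eq0.
rewrite !barK_frac ?mulf_neq0 // phiB !phiM; apply/esym/divB_gen; exact: phi_neq0.
Qed.

Lemma barKM : {morph barK : x y / x * y}.
Proof.
move=> x y.
rewrite [x]frac_repr [y]frac_repr.
set a := \n_(repr x); set b := \d_(repr x); set c := \n_(repr y); set d := \d_(repr y).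
have b0 : b != 0 by apply: denom_ratioP.
have d0 : d != 0 by apply: denom_ratioP.
have -> : a%:F / b%:F * (c%:F / d%:F) = (a * c)%:F / (b * d)%:F.
  by rewrite !tofracM mulf_div.
rewrite !barK_frac ?mulf_neq0 // !phiM mulf_div //.
Qed.

Lemma barK1 : barK 1 = 1.
Proof. by rewrite -tofrac1 barK_poly phi1. Qed.

HB.instance Definition _ := GRing.isZmodMorphism.Build K K barK barKB.
HB.instance Definition _ := GRing.isMonoidMorphism.Build K K barK (barK1, barKM).

Lemma barK_tK : barK tK = tK^-1.
Proof. by rewrite barK_poly phiX. Qed.
Lemma barK_tKV : barK tK^-1 = tK.
Proof.
rewrite -[tK^-1]mul1r -tofrac1 barK_frac ?polyX_eq0 // phi1 phiX.
by rewrite mul1r invrK.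
Qed.
Lemma barK_int (z : int) : barK z%:~R = z%:~R.
Proof. exact: rmorph_int. Qed.

Definition iQ : int -> rat := intr.
Lemma polyKE p : polyK p = (map_poly iQ p)%:F. Proof. by []. Qed.
Lemma polyKM : {morph polyK : p q / p * q}.
Proof. by move=> p q; rewrite !polyKE rmorphM tofracM. Qed.
Lemma polyKD : {morph polyK : p q / p + q}.
Proof. by move=> p q; rewrite !polyKE rmorphD tofracD. Qed.
Lemma polyKN : {morph polyK : p / - p}.
Proof. by move=> p; rewrite !polyKE rmorphN tofracN. Qed.
Lemma polyKX n : polyK 'X^n = tK ^+ n.
Proof. by rewrite polyKE rmorphXn /= map_polyX tofracXn. Qed.
Lemma polyKC z : polyK z%:P = z%:~R.
Proof.
by rewrite polyKE map_polyC /= /iQ; exact: (rmorph_int fC z).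
Qed.

Lemma polyK_inj : injective polyK.
Proof.
move=> p q; rewrite !polyKE => /eqP; rewrite tofrac_eq => /eqP.
apply: (map_inj_poly (f := iQ)) => //; exact: intr_inj.
Qed.

Lemma sign_cases (n : nat) : (-1 : int) ^+ n = 1 \/ (-1 : int) ^+ n = -1.
Proof. by rewrite -signr_odd; case: (odd n); [right|left]. Qed.

Lemma R_uniq x z w : eval_m1 x z -> eval_m1 x w -> z = w.
Proof.
move=> [n [p [-> ->]]] [m [q [E ->]]].
move/eqP: E; rewrite eqr_div ?expf_neq0 ?tK_neq0 // -!polyKX -!polyKM.
move/eqP/polyK_inj/(congr1 (fun r => r.[-1])); rewrite !hornerM !hornerXn.
by move: (p.[-1]) (q.[-1]) => P Q; case: (sign_cases n) => ->; case: (sign_cases m) => ->; lia.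
Qed.

Lemma R_mul x y z w : eval_m1 x z -> eval_m1 y w -> eval_m1 (x * y) (z * w).
Proof.
move=> [n [p [-> ->]]] [m [q [-> ->]]].
exists (n + m)%N, (p * q); split.
  by rewrite polyKM exprD mulf_div.
by rewrite hornerM exprD; ring.
Qed.

Lemma addf_div_gen (F : fieldType) (a b c d : F) : b != 0 -> d != 0 ->
  a / b + c / d = (a * d + c * b) / (b * d).
Proof. by move=> b0 d0; field; rewrite b0 d0. Qed.

Lemma R_add x y z w : eval_m1 x z -> eval_m1 y w -> eval_m1 (x + y) (z + w).
Proof.
move=> [n [p [-> ->]]] [m [q [-> ->]]].
exists (n + m)%N, (p * 'X^m + q * 'X^n); split.
  rewrite polyKD !polyKM !polyKX addf_div_gen ?expf_neq0 ?tK_neq0 //.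
  by rewrite exprD mulrC.
rewrite hornerD !hornerM !hornerXn exprD.
by move: (p.[-1]) (q.[-1]) => P Q; case: (sign_cases n) => ->; case: (sign_cases m) => ->; lia.
Qed.

Lemma R_int (z : int) : eval_m1 z%:~R z.
Proof.
exists 0%N, z%:P; split; first by rewrite polyKC expr0 divr1.
by rewrite hornerC expr0 mul1r.
Qed.

Lemma R_opp x z : eval_m1 x z -> eval_m1 (- x) (- z).
Proof.
move=> H; have := R_mul (R_int (-1)) H.
by rewrite mulrN1z mulN1r mulN1r.
Qed.

Lemma R_tK : eval_m1 tK (-1).
Proof.
exists 0%N, 'X; split; first by rewrite -[X in X = _]expr1 -(polyKX 1) expr0 divr1.
by rewrite hornerX expr0 mul1r.
Qed.

Lemma R_tKV : eval_m1 tK^-1 (-1).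
Proof.
exists 1%N, 1; split; first by rewrite expr1 (_ : polyK 1 = 1) ?mul1r // -(expr0 (GRing.exp (R:={poly int}) (polyX int) 1)) polyKX expr0.
by rewrite hornerC expr1 mulr1.
Qed.

Lemma polyKB : {morph polyK : p q / p - q}.
Proof. by move=> p q; rewrite polyKD polyKN. Qed.
Lemma polyK1 : polyK 1 = 1.
Proof. by rewrite -(expr0 (GRing.exp (R:={poly int}) (polyX int) 1)) polyKX expr0. Qed.
HB.instance Definition _ := GRing.isZmodMorphism.Build {poly int} K polyK polyKB.
HB.instance Definition _ := GRing.isMonoidMorphism.Build {poly int} K polyK (polyK1, polyKM).

Lemma polyK_sum p : polyK p = \sum_(i < size p) (p`_i)%:~R * tK ^+ i.
Proof.
rewrite -{1}[p]coefK poly_def rmorph_sum; apply: eq_bigr => i _.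
by rewrite -mul_polyC rmorphM /= polyKC polyKX.
Qed.

Lemma R_sum (I : Type) (r : seq I) (P : pred I) (F : I -> K) (G : I -> int) :
  (forall i, P i -> eval_m1 (F i) (G i)) ->
  eval_m1 (\sum_(i <- r | P i) F i) (\sum_(i <- r | P i) G i).
Proof.
move=> H; apply: (big_ind2 (fun x z => eval_m1 x z)) => //.
- exact: (R_int 0).
- by move=> ? ? ? ?; apply: R_add.
Qed.

Lemma R_pow x z n : eval_m1 x z -> eval_m1 (x ^+ n) (z ^+ n).
Proof.
move=> H; elim: n => [|n IH]; first by rewrite !expr0; exact: (R_int 1).
by rewrite !exprS; apply: R_mul.
Qed.

Lemma R_bar x z : eval_m1 x z -> eval_m1 (barK x) z.
Proof.
move=> [n [p [-> ->]]].
rewrite fmorph_div /= rmorphXn /= barK_tK polyK_sum rmorph_sum /=.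
rewrite exprVn invrK mulrC; apply: R_mul; first exact: R_pow R_tK.
rewrite horner_coef; apply: R_sum => i _.
rewrite rmorphM /= rmorph_int rmorphXn /= barK_tK.
by apply: R_mul; [exact: R_int | exact: R_pow R_tKV].
Qed.

Lemma R_laurent x z : eval_m1 x z -> laurent x.
Proof. by move=> [n [p [-> _]]]; exists n, p. Qed.

Lemma laurent_R x : laurent x -> exists z, eval_m1 x z.
Proof. by move=> [n [p ->]]; exists ((-1) ^+ n * p.[-1]), n, p. Qed.

Lemma R_prod (I : Type) (r : seq I) (P : pred I) (F : I -> K) (G : I -> int) :
  (forall i, P i -> eval_m1 (F i) (G i)) ->
  eval_m1 (\prod_(i <- r | P i) F i) (\prod_(i <- r | P i) G i).
Proof.
move=> H; apply: (big_ind2 (fun x z => eval_m1 x z)) => //.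
- exact: (R_int 1).
- by move=> ? ? ? ?; apply: R_mul.
Qed.

Lemma Rmx_mul m n p (A : 'M[K]_(m, n)) B (C : 'M[K]_(n, p)) D :
  eval_m1_mx A B -> eval_m1_mx C D -> eval_m1_mx (A *m C) (B *m D).
Proof.
move=> HA HC i j; rewrite !mxE; apply: R_sum => k _; exact: R_mul.
Qed.

Lemma Rmx_tr m n (A : 'M[K]_(m, n)) B : eval_m1_mx A B -> eval_m1_mx A^T B^T.
Proof. by move=> H i j; rewrite !mxE. Qed.

Lemma Rmx_bar m n (A : 'M[K]_(m, n)) B : eval_m1_mx A B -> eval_m1_mx (barmx A) B.
Proof. by move=> H i j; rewrite !mxE; apply: R_bar. Qed.

Lemma Rmx_uniq m n (A : 'M[K]_(m, n)) B C :
  eval_m1_mx A B -> eval_m1_mx A C -> B = C.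
Proof. by move=> H1 H2; apply/matrixP => i j; apply: R_uniq (H1 i j) (H2 i j). Qed.

Lemma Rmx_det n (A : 'M[K]_n) B : eval_m1_mx A B -> eval_m1 (\det A) (\det B).
Proof.
move=> H; rewrite /determinant; apply: R_sum => s _.
apply: R_mul; first exact: R_pow (R_int (-1)).
by apply: R_prod => i _.
Qed.

Lemma Rmx_add m n (A : 'M[K]_(m, n)) B C D :
  eval_m1_mx A B -> eval_m1_mx C D -> eval_m1_mx (A + C) (B + D).
Proof. by move=> H1 H2 i j; rewrite !mxE; apply: R_add. Qed.

Lemma Rmx1 n : eval_m1_mx (1%:M : 'M[K]_n) 1%:M.
Proof. by move=> i j; rewrite !mxE; case: (i == j); [exact: (R_int 1) | exact: (R_int 0)]. Qed.

Definition wI : 'rV[int]_3 := \row_(j < 3) (-1) ^+ j.+1.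
Definition onesI : 'cV[int]_3 := const_mx 1.
Definition NI : 'M[int]_3 :=
  \matrix_(i < 3, j < 3) (if i == j then 0 else if (i < j)%N then 1 else -1).
Definition Nt : 'M[K]_3 :=
  \matrix_(i < 3, j < 3) (if i == j then 0 else if (i < j)%N then - tK^-1 else -1).

Lemma R_vK : eval_m1_mx vK wI.
Proof. by move=> i j; rewrite !mxE; apply: R_pow R_tK. Qed.
Lemma R_ones : eval_m1_mx ones onesI.
Proof. by move=> i j; rewrite !mxE; exact: (R_int 1). Qed.
Lemma R_Nt : eval_m1_mx Nt NI.
Proof.
move=> i j; rewrite !mxE; case: (i == j); first exact: (R_int 0).
case: (i < j)%N; last exact: (R_int (-1)).
by rewrite -[1](opprK (1 : int)); apply: R_opp; apply: R_tKV.
Qed.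

Lemma tK1_neq0 : 1 + tK != 0.
Proof.
rewrite /tK -tofrac1 -tofracD tofrac_eq0; apply/eqP => /(congr1 (fun p : {poly rat} => p`_1)).
by rewrite coefD coef1 coefX coef0.
Qed.

Lemma J3_split : J3 = ones *m ones^T + (1 + tK) *: Nt.
Proof.
apply/matrixP => i j; rewrite !mxE big_ord1 !mxE mul1r.
case: (i == j); first by rewrite mulr0 addr0.
case: (i < j)%N.
  rewrite mulrN mulrDl mul1r mulfV ?tK_neq0 //.
  by ring.
by ring.
Qed.

Lemma barmx_ones : barmx ones = ones.
Proof. by apply/matrixP => i j; rewrite !mxE rmorph1. Qed.

Lemma barmxM m n p (A : 'M[K]_(m, n)) (C : 'M[K]_(n, p)) :
  barmx (A *m C) = barmx A *m barmx C.
Proof. exact: map_mxM. Qed.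

Lemma burau_Nt A : burau A -> barmx A *m Nt *m A^T = Nt.
Proof.
case=> _ _ H1 H2.
move: H2; rewrite J3_split mulmxDr mulmxDl !mulmxA.
have -> : barmx A *m ones = ones by rewrite -[in LHS]barmx_ones -barmxM H1 barmx_ones.
rewrite -(mulmxA ones) -trmx_mul H1 -scalemxAr -scalemxAl.
move/addrI/eqP; rewrite -subr_eq0 -scalerBr scaler_eq0 (negbTE tK1_neq0) /=.
by rewrite subr_eq0 => /eqP.
Qed.

Lemma burau_eval A B : burau A -> eval_m1_mx A B ->
  [/\ wI *m B = wI, B *m onesI = onesI & B *m NI *m B^T = NI].
Proof.
move=> hb HB; have hb' := hb; case: hb' => _ H1 H2 _; split.
- apply: Rmx_uniq (Rmx_mul R_vK HB) _; rewrite H1; exact: R_vK.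
- apply: Rmx_uniq (Rmx_mul HB R_ones) _; rewrite H2; exact: R_ones.
- apply: Rmx_uniq (Rmx_mul (Rmx_mul (Rmx_bar HB) R_Nt) (Rmx_tr HB)) _.
  rewrite burau_Nt //; exact: R_Nt.
Qed.

Definition ent (R : Type) n (A : 'M[R]_n.+1) (i j : nat) := A (inord i) (inord j).

Lemma entE (R : Type) n (A : 'M[R]_n.+1) (i j : 'I_n.+1) : A i j = ent A i j.
Proof. by rewrite /ent !inord_val. Qed.

Lemma det2 (R : comNzRingType) (A : 'M[R]_2) :
  \det A = ent A 0 0 * ent A 1 1 - ent A 0 1 * ent A 1 0.
Proof.
rewrite (expand_det_row _ 0) !big_ord_recr big_ord0 /= add0r /cofactor !det_mx11 !mxE /=.
rewrite !(entE A) /= /bump /=; ring.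
Qed.

Lemma det3 (R : comNzRingType) (A : 'M[R]_3) :
  \det A = ent A 0 0 * (ent A 1 1 * ent A 2 2 - ent A 1 2 * ent A 2 1)
          - ent A 0 1 * (ent A 1 0 * ent A 2 2 - ent A 1 2 * ent A 2 0)
          + ent A 0 2 * (ent A 1 0 * ent A 2 1 - ent A 1 1 * ent A 2 0).
Proof.
rewrite (expand_det_row _ 0) !big_ord_recr big_ord0 /= add0r /cofactor !det2.
rewrite /ent !mxE !(entE A) /= !inordK //= /bump /=; ring.
Qed.

Lemma int_constraints (B : 'M[int]_3) :
  wI *m B = wI -> B *m onesI = onesI -> B *m NI *m B^T = NI ->
  \det B = 1 /\ \det (rho B) = 1.
Proof.
move=> /matrixP Hw /matrixP Ho /matrixP HN.
have w0 := Hw 0 0; have w1 := Hw 0 1; have w2 := Hw 0 2.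
have o0 := Ho 0 0; have o2 := Ho 2 0.
have n01 := HN 0 1.
move: w0 w1 w2 o0 o2 n01.
do 3! rewrite ?mxE ?big_ord_recr ?big_ord0 /=.
rewrite !(entE B) /=.
have m1 : (1 %% 3 = 1)%N by []. have m2 : ((1 + 1) %% 3 = 2)%N by [].
rewrite !m1 !m2.
rewrite det3 det2 /ent !mxE /= !inordK //= -!/(ent B _ _).
rewrite !(entE B) /=.
move: (ent B 0 0) (ent B 0 1) (ent B 0 2) (ent B 1 0) (ent B 1 1) (ent B 1 2)
  (ent B 2 0) (ent B 2 1) (ent B 2 2) => a b c d g h e k f.
rewrite !exprS !expr0 => w0 w1 w2 o0 o2 n01.
have Ed : d = -1 + a + e by lia.
have Eg : g = 1 + b + k by lia.
have Eh : h = -1 + c + f by lia.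
have Eb : b = 1 - a - c by lia.
have Ek : k = 1 - e - f by lia.
move: n01; rewrite Ed Eg Eh Eb Ek => n01.
split.
  lia.
lia.
Qed.

Lemma polyXn_unit (N : nat) : forall p q : {poly int}, p * q = 'X^N ->
  exists (a : nat) (s : int), (s = 1 \/ s = -1) /\ p = s%:P * 'X^a.
Proof.
elim: N => [|N IH] p q.
  rewrite expr0 => pq.
  have pu : p \is a GRing.unit by apply/unitrPr; exists q.
  move: pu; rewrite poly_unitE => /andP[/eqP s1 u0].
  exists 0%N, p`_0; split; last by rewrite expr0 mulr1 {1}[p]size1_polyC ?s1.
  by move: u0 => /orP[/eqP->|/eqP->]; [left|right].
move=> pq.
have := congr1 (fun r => r.[0]) pq; rewrite /= hornerM hornerXn exprS mul0r.
move/eqP; rewrite mulf_eq0 => /orP[] r0.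
  have /factor_theorem [p' Ep] : root p 0 by [].
  move: pq; rewrite Ep subr0 exprSr -mulrA [_ * q]mulrC mulrA => /mulIf.
  case/(_ (negbT (polyX_eq0 _)))/IH => a [s [s1 ->]].
  by exists a.+1, s; split => //; rewrite -mulrA -exprSr.
have /factor_theorem [q' Eq] : root q 0 by [].
move: pq; rewrite Eq subr0 exprSr mulrA => /mulIf.
by case/(_ (negbT (polyX_eq0 _)))/IH => a [s [s1 ->]]; exists a, s.
Qed.

Lemma laurent_mx_eval m n (A : 'M[K]_(m.+1, n.+1)) :
  (forall i j, laurent (A i j)) -> exists B, eval_m1_mx A B.
Proof.
move=> H.
have [f Hf] := @fin_all_exists _ (fun _ => int)
   (fun ij z => eval_m1 (A ij.1 ij.2) z) (fun ij => laurent_R (H ij.1 ij.2)).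
by exists (\matrix_(i, j) f (i, j)) => i j; rewrite mxE; apply: (Hf (i, j)).
Qed.

Lemma laurent_unit x y : laurent x -> laurent y -> x * y = 1 ->
  exists (a n : nat) (s : int), (s = 1 \/ s = -1) /\
     x = polyK (s%:P * 'X^a) / tK ^+ n.
Proof.
move=> [n [p ->]] [m [q ->]].
rewrite mulf_div -polyKM -exprD => /(congr1 (fun z => z * tK ^+ (n + m))).
rewrite divfK ?expf_neq0 ?tK_neq0 // mul1r -polyKX => /polyK_inj/polyXn_unit [a [s [s1 Ep]]].
by exists a, n, s; rewrite Ep.
Qed.

Lemma intr_signK (R : nzRingType) (k : nat) : ((-1 : int) ^+ k)%:~R = (-1 : R) ^+ k.
Proof. by rewrite rmorphXn /= rmorphN1. Qed.

Lemma part1 A : burau A -> exists k : int, \det A = (- tK) ^ k.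
Proof.
move=> hb; have hb' := hb; case: hb' => [[HL [A' [HL' [E1 E2]]]]] _ _ _.
have [B HB] := laurent_mx_eval HL.
have [B' HB'] := laurent_mx_eval HL'.
have [w1 o1 n1] := burau_eval hb HB.
have [dB _] := int_constraints w1 o1 n1.
have RA := Rmx_det HB; have RA' := Rmx_det HB'.
have : \det A * \det A' = 1 by rewrite -det_mulmx E1 det1.
case/(laurent_unit (R_laurent RA) (R_laurent RA')) => a [n [s [s1 Ed]]].
have Rs : eval_m1 (\det A) ((-1) ^+ n * (s * (-1) ^+ a)).
  by exists n, (s%:P * 'X^a); rewrite Ed hornerM hornerC hornerXn.
have := R_uniq Rs RA; rewrite dB => Es.
have Es' : s = (-1) ^+ (a + n).
  move: Es; rewrite exprD.
  by case: (sign_cases n) => ->; case: (sign_cases a) => ->; case: s1 => ->; lia.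
exists (a%:Z - n%:Z).
rewrite Ed expfzDr ?oppr_eq0 ?tK_neq0 // -exprnN.
rewrite polyKM polyKC polyKX Es' intr_signK.
change ((- tK) ^ (a%:Z)) with ((- tK) ^+ a).
rewrite (exprNn tK a) (exprNn tK n) exprD invfM -!exprVn invrN1; ring.
Qed.

Lemma part2 A B : burau A -> eval_m1_mx A B ->
  exists M : 'M[int]_2, \det M = 1 /\ proj_eq (rho B) M.
Proof.
move=> hb HB; have [w1 o1 n1] := burau_eval hb HB.
have [_ dR] := int_constraints w1 o1 n1.
exists (rho B); split => //; exists 1; split; first exact: oner_neq0.
by rewrite scale1r.
Qed.

Definition mk3 (R : zmodType) (l : seq (seq R)) : 'M[R]_3 :=
  \matrix_(i < 3, j < 3) (nth [::] l i)`_j.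

Lemma ent_mk3 (R : zmodType) (l : seq (seq R)) i j : (i < 3)%N -> (j < 3)%N ->
  ent (mk3 l) i j = (nth [::] l i)`_j.
Proof. by move=> hi hj; rewrite /ent mxE !inordK. Qed.

Lemma ent_mul3 (R : pzRingType) (A B : 'M[R]_3) i j : (i < 3)%N -> (j < 3)%N ->
  ent (A *m B) i j = ent A i 0 * ent B 0 j + ent A i 1 * ent B 1 j + ent A i 2 * ent B 2 j.
Proof.
move=> hi hj; rewrite {1}/ent mxE !big_ord_recr big_ord0 /= add0r.
by rewrite !(entE A) !(entE B) /= !inordK.
Qed.

Lemma ent_tr (R : Type) (A : 'M[R]_3) i j : ent A^T i j = ent A j i.
Proof. by rewrite /ent mxE. Qed.

Lemma ent_map (R S : Type) (f : R -> S) (A : 'M[R]_3) i j : ent (map_mx f A) i j = f (ent A i j).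
Proof. by rewrite /ent mxE. Qed.

Lemma ent1 (R : pzRingType) i j : (i < 3)%N -> (j < 3)%N ->
  ent (1%:M : 'M[R]_3) i j = (i == j)%:R.
Proof. by move=> hi hj; rewrite /ent mxE -val_eqE /= !inordK. Qed.

Lemma mx3P (R : Type) (M N : 'M[R]_3) :
  (forall i j, (i < 3)%N -> (j < 3)%N -> ent M i j = ent N i j) -> M = N.
Proof. by move=> H; apply/matrixP => i j; rewrite (entE M) (entE N); apply: H. Qed.

Ltac mx3_cases := let i := fresh "i" in let j := fresh "j" in
  let hi := fresh "hi" in let hj := fresh "hj" in
  apply: mx3P => i j hi hj;
  case: i hi => [|[|[|i]]] // _; case: j hj => [|[|[|j]]] // _.

Definition S1g (F : fieldType) (t : F) : 'M[F]_3 :=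
  mk3 [:: [:: 1 - t; t; 0]; [:: 1; 0; 0]; [:: 0; 0; 1]].
Definition S1ig (F : fieldType) (t : F) : 'M[F]_3 :=
  mk3 [:: [:: 0; 1; 0]; [:: t^-1; 1 - t^-1; 0]; [:: 0; 0; 1]].
Definition S2g (F : fieldType) (t : F) : 'M[F]_3 :=
  mk3 [:: [:: 1; 0; 0]; [:: 0; 1 - t; t]; [:: 0; 1; 0]].
Definition S2ig (F : fieldType) (t : F) : 'M[F]_3 :=
  mk3 [:: [:: 1; 0; 0]; [:: 0; 0; 1]; [:: 0; t^-1; 1 - t^-1]].
Definition Jg (F : fieldType) (t : F) : 'M[F]_3 :=
  mk3 [:: [:: 1; - t^-1; - t^-1]; [:: - t; 1; - t^-1]; [:: - t; - t; 1]].

Lemma S1_inv (F : fieldType) (t : F) : t != 0 ->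
  S1g t *m S1ig t = 1%:M /\ S1ig t *m S1g t = 1%:M.
Proof.
move=> t0; split; mx3_cases; rewrite !ent_mul3 // !ent_mk3 // ent1 //=.
all: try field; rewrite ?t0 //.
Qed.

Lemma S2_inv (F : fieldType) (t : F) : t != 0 ->
  S2g t *m S2ig t = 1%:M /\ S2ig t *m S2g t = 1%:M.
Proof.
move=> t0; split; mx3_cases; rewrite !ent_mul3 // !ent_mk3 // ent1 //=.
all: try field; rewrite ?t0 //.
Qed.

Lemma S1_J (F : fieldType) (t : F) : t != 0 ->
  S1g t^-1 *m Jg t *m (S1g t)^T = Jg t.
Proof.
move=> t0; mx3_cases; rewrite !ent_mul3 // !ent_tr !ent_mk3 //=.
all: field; rewrite ?t0 //.
Qed.

Lemma S2_J (F : fieldType) (t : F) : t != 0 ->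
  S2g t^-1 *m Jg t *m (S2g t)^T = Jg t.
Proof.
move=> t0; mx3_cases; rewrite !ent_mul3 // !ent_tr !ent_mk3 //=.
all: field; rewrite ?t0 //.
Qed.

Definition vg (F : fieldType) (t : F) : 'rV[F]_3 := \row_(j < 3) t ^+ j.+1.

Lemma S1_v (F : fieldType) (t : F) : vg t *m S1g t = vg t.
Proof.
apply/rowP => j; rewrite !mxE !big_ord_recr big_ord0 /= !mxE /=.
case: j => [[|[|[|j]]] hj] //=; ring.
Qed.

Lemma S2_v (F : fieldType) (t : F) : vg t *m S2g t = vg t.
Proof.
apply/rowP => j; rewrite !mxE !big_ord_recr big_ord0 /= !mxE /=.
case: j => [[|[|[|j]]] hj] //=; ring.
Qed.

Lemma S1_o (F : fieldType) (t : F) : S1g t *m (const_mx 1 : 'cV[F]_3) = const_mx 1.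
Proof.
apply/colP => j; rewrite !mxE !big_ord_recr big_ord0 /= !mxE /=.
case: j => [[|[|[|j]]] hj] //=; ring.
Qed.

Lemma S2_o (F : fieldType) (t : F) : S2g t *m (const_mx 1 : 'cV[F]_3) = const_mx 1.
Proof.
apply/colP => j; rewrite !mxE !big_ord_recr big_ord0 /= !mxE /=.
case: j => [[|[|[|j]]] hj] //=; ring.
Qed.

Lemma barmx1 : barmx (1%:M : 'M[K]_3) = 1%:M.
Proof. by apply/matrixP => i j; rewrite !mxE; case: (i == j); rewrite ?rmorph1 ?rmorph0. Qed.

Lemma laurent_mx_mul (A C : 'M[K]_3) : (forall i j, laurent (A i j)) ->
  (forall i j, laurent (C i j)) -> forall i j, laurent ((A *m C) i j).
Proof.
move=> HA HC i j.
have [B HB] := laurent_mx_eval HA; have [D HD] := laurent_mx_eval HC.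
exact: R_laurent (Rmx_mul HB HD i j).
Qed.

Lemma burau_mul A C : burau A -> burau C -> burau (A *m C).
Proof.
case=> [[LA [A' [LA' [EA1 EA2]]]] vA oA JA] [[LC [C' [LC' [EC1 EC2]]]] vC oC JC].
split.
- split; first exact: laurent_mx_mul.
  exists (C' *m A'); split; first exact: laurent_mx_mul.
  split.
    by rewrite mulmxA -(mulmxA A) EC1 mulmx1 EA1.
  by rewrite mulmxA -(mulmxA C') EA2 mulmx1 EC2.
- by rewrite mulmxA vA vC.
- by rewrite -mulmxA oC oA.
- rewrite barmxM trmx_mul -!mulmxA (mulmxA (barmx C)) (mulmxA (barmx C *m J3)) JC.
  by rewrite mulmxA JA.
Qed.

Lemma burau_inv (A A' : 'M[K]_3) : burau A -> (forall i j, laurent (A' i j)) ->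
  A *m A' = 1%:M -> A' *m A = 1%:M -> burau A'.
Proof.
case=> [[LA _] vA oA JA] LA' E1 E2; split.
- split => //; exists A; split => //.
- by rewrite -{1}vA -mulmxA E1 mulmx1.
- by rewrite -{1}oA mulmxA E2 mul1mx.
- rewrite -{1}JA !mulmxA -barmxM E2 barmx1 mul1mx -mulmxA -trmx_mul E2 trmx1.
  by rewrite mulmx1.
Qed.

Lemma burau1 : burau 1%:M.
Proof.
split.
- split; first by move=> i j; rewrite mxE; case: (i == j);
    [apply: R_laurent (R_int 1) | apply: R_laurent (R_int 0)].
  exists 1%:M; split; last by rewrite mulmx1.
  by move=> i j; rewrite mxE; case: (i == j);
    [apply: R_laurent (R_int 1) | apply: R_laurent (R_int 0)].
- by rewrite mulmx1.
- by rewrite mul1mx.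
- by rewrite barmx1 mul1mx trmx1 mulmx1.
Qed.

Lemma Rmx3 (A : 'M[K]_3) (B : 'M[int]_3) :
  (forall i j, (i < 3)%N -> (j < 3)%N -> eval_m1 (ent A i j) (ent B i j)) ->
  eval_m1_mx A B.
Proof. by move=> H i j; rewrite (entE A) (entE B); apply: H. Qed.

Lemma R0 : eval_m1 0 0.
Proof. by have := R_int 0; rewrite mulr0z. Qed.
Lemma R1 : eval_m1 1 1.
Proof. by have := R_int 1; rewrite mulr1z. Qed.
Lemma R_1mt : eval_m1 (1 - tK) 2.
Proof. by have := R_add R1 (R_opp R_tK); rewrite opprK. Qed.
Lemma R_1mtV : eval_m1 (1 - tK^-1) 2.
Proof. by have := R_add R1 (R_opp R_tKV); rewrite opprK. Qed.

Ltac R_entry := first [exact: R0 | exact: R1 | exact: R_tK | exact: R_tKV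
  | exact: R_1mt | exact: R_1mtV ].

Ltac R3_cases := let i := fresh "i" in let j := fresh "j" in
  let hi := fresh "hi" in let hj := fresh "hj" in
  apply: Rmx3 => i j hi hj;
  case: i hi => [|[|[|i]]] // _; case: j hj => [|[|[|j]]] // _;
  rewrite !ent_mk3 //=; R_entry.

Definition S1I : 'M[int]_3 := mk3 [:: [:: 2; -1; 0]; [:: 1; 0; 0]; [:: 0; 0; 1]].
Definition S1iI : 'M[int]_3 := mk3 [:: [:: 0; 1; 0]; [:: -1; 2; 0]; [:: 0; 0; 1]].
Definition S2I : 'M[int]_3 := mk3 [:: [:: 1; 0; 0]; [:: 0; 2; -1]; [:: 0; 1; 0]].
Definition S2iI : 'M[int]_3 := mk3 [:: [:: 1; 0; 0]; [:: 0; 0; 1]; [:: 0; -1; 2]].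

Lemma R_S1 : eval_m1_mx (S1g tK) S1I.
Proof. R3_cases. Qed.
Lemma R_S1i : eval_m1_mx (S1ig tK) S1iI.
Proof. R3_cases. Qed.
Lemma R_S2 : eval_m1_mx (S2g tK) S2I.
Proof. R3_cases. Qed.
Lemma R_S2i : eval_m1_mx (S2ig tK) S2iI.
Proof. R3_cases. Qed.

Lemma barK0 : barK 0 = 0.
Proof. by have := barKB 0 0; rewrite subrr => ->; rewrite subrr. Qed.

Lemma barmx_S1 : barmx (S1g tK) = S1g tK^-1.
Proof.
mx3_cases; rewrite ent_map !ent_mk3 //=;
  rewrite ?barKB ?barK1 ?barK0 ?barK_tK //.
Qed.
Lemma barmx_S2 : barmx (S2g tK) = S2g tK^-1.
Proof.
mx3_cases; rewrite ent_map !ent_mk3 //=;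
  rewrite ?barKB ?barK1 ?barK0 ?barK_tK //.
Qed.

Lemma J3E : J3 = Jg tK.
Proof.
mx3_cases; rewrite /ent !mxE -?val_eqE /= ?inordK //=.
Qed.

Lemma laurent_S (A : 'M[K]_3) B : eval_m1_mx A B -> forall i j, laurent (A i j).
Proof. by move=> H i j; apply: R_laurent (H i j). Qed.

Lemma burau_S1 : burau (S1g tK).
Proof.
have [E1 E2] := S1_inv tK_neq0.
split.
- split; first exact: laurent_S R_S1.
  by exists (S1ig tK); split => //; exact: laurent_S R_S1i.
- exact: S1_v.
- exact: S1_o.
- by rewrite barmx_S1 J3E S1_J // tK_neq0.
Qed.

Lemma burau_S2 : burau (S2g tK).
Proof.
have [E1 E2] := S2_inv tK_neq0.
split.
- split; first exact: laurent_S R_S2.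
  by exists (S2ig tK); split => //; exact: laurent_S R_S2i.
- exact: S2_v.
- exact: S2_o.
- by rewrite barmx_S2 J3E S2_J // tK_neq0.
Qed.

Lemma burau_S1i : burau (S1ig tK).
Proof.
have [E1 E2] := S1_inv tK_neq0.
exact: burau_inv burau_S1 (laurent_S R_S1i) E1 E2.
Qed.

Lemma burau_S2i : burau (S2ig tK).
Proof.
have [E1 E2] := S2_inv tK_neq0.
exact: burau_inv burau_S2 (laurent_S R_S2i) E1 E2.
Qed.

Definition mk2 (R : zmodType) (l : seq (seq R)) : 'M[R]_2 :=
  \matrix_(i < 2, j < 2) (nth [::] l i)`_j.

Lemma ent_mk2 (R : zmodType) (l : seq (seq R)) i j : (i < 2)%N -> (j < 2)%N ->
  ent (mk2 l) i j = (nth [::] l i)`_j.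
Proof. by move=> hi hj; rewrite /ent mxE !inordK. Qed.

Lemma ent_mul2 (R : pzRingType) (A B : 'M[R]_2) i j : (i < 2)%N -> (j < 2)%N ->
  ent (A *m B) i j = ent A i 0 * ent B 0 j + ent A i 1 * ent B 1 j.
Proof.
move=> hi hj; rewrite {1}/ent mxE !big_ord_recr big_ord0 /= add0r.
by rewrite !(entE A) !(entE B) /= !inordK.
Qed.

Lemma mx2P (R : Type) (M N : 'M[R]_2) :
  (forall i j, (i < 2)%N -> (j < 2)%N -> ent M i j = ent N i j) -> M = N.
Proof. by move=> H; apply/matrixP => i j; rewrite (entE M) (entE N); apply: H. Qed.

Ltac mx2_cases := let i := fresh "i" in let j := fresh "j" in
  let hi := fresh "hi" in let hj := fresh "hj" in
  apply: mx2P => i j hi hj;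
  case: i hi => [|[|i]] // _; case: j hj => [|[|j]] // _.

Lemma ent_rho (B : 'M[int]_3) i j : (i < 2)%N -> (j < 2)%N ->
  ent (rho B) i j = 1 - ent B (if i == 0%N then 0 else 2) (if j == 0%N then 2 else 0).
Proof.
move=> hi hj; rewrite /ent /rho mxE !inordK //.
by rewrite (entE B); case: (i == 0%N); case: (j == 0%N).
Qed.

Lemma affine_form (B : 'M[int]_3) : wI *m B = wI -> B *m onesI = onesI ->
  B = mk3 [:: [:: ent B 0 0; 1 - ent B 0 0 - ent B 0 2; ent B 0 2];
              [:: -1 + ent B 0 0 + ent B 2 0;
                  1 + (1 - ent B 0 0 - ent B 0 2) + (1 - ent B 2 0 - ent B 2 2);
                  -1 + ent B 0 2 + ent B 2 2];
              [:: ent B 2 0; 1 - ent B 2 0 - ent B 2 2; ent B 2 2]].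
Proof.
move=> /matrixP Hw /matrixP Ho.
have w0 := Hw 0 0; have w1 := Hw 0 1; have w2 := Hw 0 2.
have o0 := Ho 0 0; have o2 := Ho 2 0.
move: w0 w1 w2 o0 o2.
do 3! rewrite ?mxE ?big_ord_recr ?big_ord0 /=.
rewrite !(entE B) /=.
have m1 : (1 %% 3 = 1)%N by []. have m2 : ((1 + 1) %% 3 = 2)%N by [].
rewrite !m1 !m2 !exprS !expr0 => w0 w1 w2 o0 o2.
mx3_cases; rewrite ent_mk3 //=; lia.
Qed.

Lemma rho_mul (B1 B2 : 'M[int]_3) :
  wI *m B1 = wI -> B1 *m onesI = onesI -> wI *m B2 = wI -> B2 *m onesI = onesI ->
  rho (B1 *m B2) = rho B1 *m rho B2.
Proof.
move=> w1 o1 w2 o2.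
rewrite (affine_form w1 o1) (affine_form w2 o2).
move: (ent B1 0 0) (ent B1 0 2) (ent B1 2 0) (ent B1 2 2)
      (ent B2 0 0) (ent B2 0 2) (ent B2 2 0) (ent B2 2 2) => a c e f a' c' e' f'.
mx2_cases; rewrite ent_mul2 // !ent_rho // ent_mul3 // !ent_mk3 //=; ring.
Qed.

Definition Q (M : 'M[int]_2) :=
  exists (A : 'M[K]_3) (B : 'M[int]_3), [/\ burau A, eval_m1_mx A B & rho B = M].

Lemma Q_mul M1 M2 : Q M1 -> Q M2 -> Q (M1 *m M2).
Proof.
move=> [A1 [B1 [h1 e1 <-]]] [A2 [B2 [h2 e2 <-]]].
exists (A1 *m A2), (B1 *m B2); split.
- exact: burau_mul.
- exact: Rmx_mul.
- have [w1 o1 _] := burau_eval h1 e1; have [w2 o2 _] := burau_eval h2 e2.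
  exact: rho_mul.
Qed.

Definition Tm (n : int) : 'M[int]_2 := mk2 [:: [:: 1; n]; [:: 0; 1]].
Definition Lm (n : int) : 'M[int]_2 := mk2 [:: [:: 1; 0]; [:: n; 1]].

Lemma Q_gen (A : 'M[K]_3) B M : burau A -> eval_m1_mx A B -> rho B = M -> Q M.
Proof. by move=> *; exists A, B. Qed.

Lemma Q1 : Q 1%:M.
Proof.
apply: (Q_gen burau1 (@Rmx1 3%N)); mx2_cases;
  rewrite ent_rho // /ent !mxE ?inordK //. all: rewrite -?val_eqE /= ?inordK //.
Qed.

Lemma Q_Tm1 : Q (Tm (-1)).
Proof.
apply: (Q_gen burau_S1 R_S1); mx2_cases; rewrite ent_rho // !ent_mk3 // ent_mk2 //.
Qed.
Lemma Q_Tp1 : Q (Tm 1).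
Proof.
apply: (Q_gen burau_S1i R_S1i); mx2_cases; rewrite ent_rho // !ent_mk3 // ent_mk2 //.
Qed.
Lemma Q_Lp1 : Q (Lm 1).
Proof.
apply: (Q_gen burau_S2 R_S2); mx2_cases; rewrite ent_rho // !ent_mk3 // ent_mk2 //.
Qed.
Lemma Q_Lm1 : Q (Lm (-1)).
Proof.
apply: (Q_gen burau_S2i R_S2i); mx2_cases; rewrite ent_rho // !ent_mk3 // ent_mk2 //.
Qed.

Lemma ent1_2 (R : pzRingType) i j : (i < 2)%N -> (j < 2)%N ->
  ent (1%:M : 'M[R]_2) i j = (i == j)%:R.
Proof. by move=> hi hj; rewrite /ent mxE -val_eqE /= !inordK. Qed.

Lemma Tm_add m n : Tm m *m Tm n = Tm (m + n).
Proof. mx2_cases; rewrite ent_mul2 // !ent_mk2 //=; ring. Qed.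

Lemma Tm0 : Tm 0 = 1%:M.
Proof. by mx2_cases; rewrite ent_mk2 // ent1_2. Qed.

Lemma Q_Tnat (k : nat) : Q (Tm k%:Z) /\ Q (Tm (- k%:Z)).
Proof.
elim: k => [|k [IH1 IH2]]; first by rewrite oppr0 Tm0; split; exact: Q1.
split.
  by rewrite -addn1 PoszD -Tm_add; apply: Q_mul IH1 Q_Tp1.
by rewrite -addn1 PoszD opprD -Tm_add; apply: Q_mul IH2 Q_Tm1.
Qed.

Lemma Q_T (n : int) : Q (Tm n).
Proof.
case: n => k; first exact: (Q_Tnat k).1.
by rewrite NegzE; exact: (Q_Tnat k.+1).2.
Qed.

Definition Sm : 'M[int]_2 := mk2 [:: [:: 0; -1]; [:: 1; 0]].
Definition Smi : 'M[int]_2 := mk2 [:: [:: 0; 1]; [:: -1; 0]].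

Lemma Q_S : Q Sm.
Proof.
have -> : Sm = Tm (-1) *m Lm 1 *m Tm (-1).
  by mx2_cases; rewrite !ent_mul2 // !ent_mk2 //=.
by apply: Q_mul; [apply: Q_mul; [exact: Q_Tm1 | exact: Q_Lp1] | exact: Q_Tm1].
Qed.

Lemma Q_Si : Q Smi.
Proof.
have -> : Smi = Tm 1 *m Lm (-1) *m Tm 1.
  by mx2_cases; rewrite !ent_mul2 // !ent_mk2 //=.
by apply: Q_mul; [apply: Q_mul; [exact: Q_Tp1 | exact: Q_Lm1] | exact: Q_Tp1].
Qed.

Lemma Smi_Sm : Smi *m Sm = 1%:M.
Proof. by mx2_cases; rewrite ent_mul2 // !ent_mk2 // ent1_2. Qed.

Lemma Sm_Sm : Sm *m Sm = - 1%:M.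
Proof. by mx2_cases; rewrite ent_mul2 // !ent_mk2 // /ent !mxE -?val_eqE /= ?inordK. Qed.

Lemma mx2E (M : 'M[int]_2) :
  M = mk2 [:: [:: ent M 0 0; ent M 0 1]; [:: ent M 1 0; ent M 1 1]].
Proof. by mx2_cases; rewrite ent_mk2. Qed.

Lemma Q_all (n : nat) : forall M : 'M[int]_2, \det M = 1 ->
  (`|ent M 1 0| < n)%N -> Q M.
Proof.
elim: n => [|n IH] M dM hc //.
rewrite det2 in dM.
move: dM hc; rewrite [M]mx2E !ent_mk2 //=.
move: (ent M 0 0) (ent M 0 1) (ent M 1 0) (ent M 1 1) => a b c d dM hc.
have [c0|c0] := eqVneq c 0.
  subst c; rewrite mulr0 subr0 in dM.
  have : (d == 1) || (d == -1) by apply: (@intUnitRing.unitzPl d a).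
  case/orP => /eqP Ed; subst d.
    have -> : a = 1 by move: dM; rewrite mulr1.
    have -> : mk2 [:: [:: 1; b]; [:: 0; 1]] = Tm b by [].
    exact: Q_T.
  have Ea : a = -1 by lia.
  subst a.
  have -> : mk2 [:: [:: -1; b]; [:: 0; -1]] = Sm *m Sm *m Tm (- b).
    by rewrite Sm_Sm; mx2_cases; rewrite ent_mul2 // !ent_mk2 // /ent !mxE -?val_eqE /= ?inordK //=; ring.
  by apply: Q_mul; [apply: Q_mul; exact: Q_S | exact: Q_T].
clear M; set M := mk2 _.
pose q := (a %/ c)%Z; pose r := (a %% c)%Z.
set M' := Sm *m Tm (- q) *m M.
have EM : M = Tm q *m Smi *m M'.
  rewrite /M' !mulmxA -(mulmxA (Tm q)) Smi_Sm mulmx1 Tm_add subrr Tm0.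
  by rewrite mul1mx.
rewrite EM; apply: Q_mul; first by apply: Q_mul; [exact: Q_T | exact: Q_Si].
apply: IH.
  rewrite /M' !det_mulmx !det2 /M !ent_mk2 //=; lia.
rewrite /M' ent_mul2 // !ent_mul2 // !ent_mk2 //=.
have Ea := divz_eq a c.
have r0 : (0 <= r)%R by apply: modz_ge0.
have rc : (r < `|c|)%R by apply: ltz_mod.
rewrite -/q -/r in Ea.
have -> : ((1 * 1 + 0 * 0) * a + (1 * - q + 0 * 1) * c)%R = r by rewrite Ea; ring.
move: r0 rc hc; clearbody r; clear -r; move: r c => r c.
lia.
Qed.

Theorem lemma3p10 :
  (forall A : 'M[K]_3, burau A -> exists k : int, \det A = (- tK) ^ k) /\
  (forall (A : 'M[K]_3) (B : 'M[int]_3), burau A -> eval_m1_mx A B ->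
     exists M : 'M[int]_2, \det M = 1 /\ proj_eq (rho B) M) /\
  (forall M : 'M[int]_2, \det M = 1 ->
     exists (A : 'M[K]_3) (B : 'M[int]_3),
       [/\ burau A, eval_m1_mx A B & proj_eq (rho B) M]).
Proof.
split; first exact: part1.
split; first exact: part2.
move=> M dM.
have [A [B [hA hB hM]]] := Q_all dM (ltnSn _).
exists A, B; split => //; exists 1; split; first exact: oner_neq0.
by rewrite scale1r hM.
Qed.
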